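(* Let $(\mathcal{H},d)$ be a Hadamard space, $X_1,\dots,X_n\in\mathcal{H}$, $C_n=\mathrm{conv}\{X_1,\dots,X_n\}$, and $y\in\mathbb{R}^n$. Then the domain of $\bar h_y$, $\{x\in\mathcal{H}:\bar h_y(x)>-\infty\}$, equals $\mathrm{cl}(C_n)$.
   Context: A Hadamard space is a complete CAT(0) geodesic metric space, with unique geodesics; $\mathcal{H}\times\mathbb{R}$ is again a Hadamard space. A set is convex if it contains the geodesic between any two of its points; $\mathrm{conv}$ denotes convex hull and $\mathrm{cl}$ closure. A function $g:\mathcal{H}\to[-\infty,\infty]$ is concave if its hypograph $\mathrm{hypo}\,g=\{(x,\mu):\mu\le g(x)\}$ is convex in $\mathcal{H}\times\mathbb{R}$. For $y=(y_1,\dots,y_n)\in\mathbb{R}^n$, define $f_y(x)=y_i$ if $x=X_i$ and $f_y(x)=-\infty$ otherwise. The upper-semicontinuous concave hull $\bar h_y$ of $f_y$ is the least upper-semicontinuous concave function $g$ with $g\ge f_y$ (i.e. $g(X_i)\ge y_i$ for all $i$); equivalently, $\mathrm{hypo}\,\bar h_y=\mathrm{cl}(\mathrm{conv}(\mathrm{hypo}\,f_y))$. *)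

(* Defs.v *)
From Stdlib Require Import Reals.
From Coquelicot Require Import Coquelicot.
Open Scope R_scope.

Section Metric.
Variable T : Type.
Variable d : T -> T -> R.

Definition is_metric : Prop :=
  (forall x y, 0 <= d x y) /\
  (forall x y, d x y = 0 <-> x = y) /\
  (forall x y, d x y = d y x) /\
  (forall x y z, d x z <= d x y + d y z).

Definition is_complete : Prop :=
  forall u : nat -> T,
    (forall eps, 0 < eps -> exists N, forall m k, (N <= m)%nat -> (N <= k)%nat ->
        d (u m) (u k) < eps) ->
    exists l, forall eps, 0 < eps -> exists N, forall k, (N <= k)%nat -> d (u k) l < eps.

Definition is_geodesic (x y : T) (g : R -> T) : Prop :=
  g 0 = x /\ g 1 = y /\
  forall s t, 0 <= s <= 1 -> 0 <= t <= 1 -> d (g s) (g t) = Rabs (s - t) * d x y.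

Definition is_geodesic_space : Prop :=
  forall x y, exists g, is_geodesic x y g.

Definition is_CAT0 : Prop :=
  forall x y z g t, is_geodesic x y g -> 0 <= t <= 1 ->
    (d z (g t)) ^ 2 <= (1 - t) * (d z x) ^ 2 + t * (d z y) ^ 2 - t * (1 - t) * (d x y) ^ 2.

Definition is_Hadamard : Prop :=
  is_metric /\ is_complete /\ is_geodesic_space /\ is_CAT0.

Definition convex (S : T -> Prop) : Prop :=
  forall x y g, S x -> S y -> is_geodesic x y g ->
    forall t, 0 <= t <= 1 -> S (g t).

Definition conv (A : T -> Prop) : T -> Prop :=
  fun x => forall S, convex S -> (forall z, A z -> S z) -> S x.

Definition cl (A : T -> Prop) : T -> Prop :=
  fun x => forall eps, 0 < eps -> exists z, A z /\ d x z < eps.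

Definition usc (g : T -> Rbar) : Prop :=
  forall x (c : R), Rbar_lt (g x) c ->
    exists delta, 0 < delta /\ forall z, d x z < delta -> Rbar_lt (g z) c.

End Metric.

Definition prod_dist {T : Type} (d : T -> T -> R) (p q : T * R) : R :=
  sqrt ((d (fst p) (fst q)) ^ 2 + (snd p - snd q) ^ 2).

Definition hypo {T : Type} (g : T -> Rbar) : T * R -> Prop :=
  fun p => Rbar_le (Finite (snd p)) (g (fst p)).

Definition concave {T : Type} (d : T -> T -> R) (g : T -> Rbar) : Prop :=
  convex (T * R) (prod_dist d) (hypo g).

Definition majorizes_fy {T : Type} (n : nat) (X : nat -> T) (y : nat -> R)
  (g : T -> Rbar) : Prop :=
  forall i, (i < n)%nat -> Rbar_le (Finite (y i)) (g (X i)).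

(* upper-semicontinuous concave hull of f_y: pointwise infimum of all usc
   concave g >= f_y (this is the least such function) *)
Definition hbar {T : Type} (d : T -> T -> R) (n : nat) (X : nat -> T)
  (y : nat -> R) (x : T) : Rbar :=
  Rbar_glb (fun v => exists g : T -> Rbar,
     usc T d g /\ concave d g /\ majorizes_fy n X y g /\ v = g x).

Definition pts {T : Type} (n : nat) (X : nat -> T) : T -> Prop :=
  fun z => exists i, (i < n)%nat /\ z = X i.

(* Main.v *)
Require Import Defs.
From Stdlib Require Import Reals.
From Coquelicot Require Import Coquelicot.
From Stdlib Require Import Lra Psatz ClassicalEpsilon Classical.
Open Scope R_scope.

Lemma glb_correct (E : Rbar -> Prop) : Rbar_is_glb E (Rbar_glb E).
Proof.
  destruct (Rbar_ex_glb E) as [l Hl].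
  rewrite (Rbar_is_glb_unique E l Hl). exact Hl.
Qed.

Lemma arith_betw (x1 x2 x3 y1 y2 : R) :
  0 <= x1 -> 0 <= x2 -> 0 <= x3 -> x3 <= x1 + x2 ->
  sqrt (x1 ^ 2 + y1 ^ 2) + sqrt (x2 ^ 2 + y2 ^ 2) = sqrt (x3 ^ 2 + (y1 + y2) ^ 2) ->
  x3 = x1 + x2.
Proof.
  intros h1 h2 h3 h4 H.
  assert (e1 : sqrt (x1 ^ 2 + y1 ^ 2) * sqrt (x1 ^ 2 + y1 ^ 2) = x1 ^ 2 + y1 ^ 2)
    by (apply sqrt_sqrt; apply Rplus_le_le_0_compat; apply pow2_ge_0).
  assert (e2 : sqrt (x2 ^ 2 + y2 ^ 2) * sqrt (x2 ^ 2 + y2 ^ 2) = x2 ^ 2 + y2 ^ 2)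
    by (apply sqrt_sqrt; apply Rplus_le_le_0_compat; apply pow2_ge_0).
  assert (e3 : sqrt (x3 ^ 2 + (y1+y2) ^ 2) * sqrt (x3 ^ 2 + (y1+y2) ^ 2) = x3 ^ 2 + (y1+y2) ^ 2)
    by (apply sqrt_sqrt; apply Rplus_le_le_0_compat; apply pow2_ge_0).
  remember (sqrt (x1 ^ 2 + y1 ^ 2)) as S1 eqn:eS1.
  remember (sqrt (x2 ^ 2 + y2 ^ 2)) as S2 eqn:eS2.
  remember (sqrt (x3 ^ 2 + (y1+y2) ^ 2)) as S3 eqn:eS3.
  assert (p1 : 0 <= S1) by (rewrite eS1; apply sqrt_pos).
  assert (p2 : 0 <= S2) by (rewrite eS2; apply sqrt_pos).
  assert (CS : (x1*x2 + y1*y2)^2 <= (S1*S2)^2).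
  { replace ((S1*S2)^2) with ((S1*S1)*(S2*S2)) by ring. rewrite e1, e2.
    pose proof (pow2_ge_0 (x1*y2 - x2*y1)). nra. }
  assert (CS2 : x1*x2 + y1*y2 <= S1*S2).
  { destruct (Rle_lt_dec (x1*x2 + y1*y2) 0). nra.
    apply Rsqr_incr_0_var. unfold Rsqr. nra. nra. }
  assert (x3^2 >= (x1+x2)^2).
  { assert (S3 * S3 = (S1+S2)*(S1+S2)) by (rewrite <- H; ring). nra. }
  nra.
Qed.

Section X.
End X.

Lemma geo_rev (T : Type) (d : T -> T -> R) (Hm : is_metric T d) x y g :
  is_geodesic T d x y g -> is_geodesic T d y x (fun u => g (1 - u)).
Proof.
  destruct Hm as (Hp & Hz & Hs & Ht).
  intros (h0 & h1 & hd). split; [|split].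
  - replace (1 - 0) with 1 by ring. exact h1.
  - replace (1 - 1) with 0 by ring. exact h0.
  - intros s t Hs' Ht'. rewrite hd by lra. rewrite Hs.
    f_equal. replace (1 - s - (1 - t)) with (- (s - t)) by ring. apply Rabs_Ropp.
Qed.

Lemma geo_dist (T : Type) (d : T -> T -> R) x y g s t :
  is_geodesic T d x y g -> 0 <= s <= 1 -> 0 <= t <= 1 -> d (g s) (g t) = Rabs (s - t) * d x y.
Proof. intros (_ & _ & hd). apply hd. Qed.

Lemma geo_close (T : Type) (d : T -> T -> R) (Hm : is_metric T d) (Hc : is_CAT0 T d)
  a a' b s1 s2 t :
  is_geodesic T d a b s1 -> is_geodesic T d a' b s2 -> 0 <= t <= 1 ->
  d (s1 t) (s2 t) ^ 2 <= d a a' * (4 * d a b + d a a').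
Proof.
  intros G1 G2 Ht.
  pose proof Hm as (Hp & Hz & Hs & Htr).
  pose proof (Hc a' b (s1 t) s2 t G2 Ht) as C.
  destruct G1 as (e0 & e1 & hd).
  assert (da : d (s1 t) a = t * d a b).
  { rewrite <- e0 at 1. rewrite hd by lra. rewrite Rabs_right by lra. ring. }
  assert (db : d (s1 t) b = (1 - t) * d a b).
  { rewrite <- e1 at 1. rewrite hd by lra. rewrite Rabs_left1 by lra. ring. }
  assert (da' : d (s1 t) a' <= t * d a b + d a a').
  { rewrite <- da. apply Htr. }
  assert (dab : d a b <= d a a' + d a' b) by apply Htr.
  rewrite db in C.
  set (A := d a b) in *. set (B := d a' b) in *. set (del := d a a') in *.
  set (X0 := d (s1 t) a') in *.
  assert (0 <= A) by apply Hp. assert (0 <= B) by apply Hp. assert (0 <= del) by apply Hp.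
  assert (0 <= X0) by apply Hp.
  assert (AB : A^2 - B^2 <= 2 * A * del).
  { destruct (Rle_lt_dec A B). nra.
    assert ((A-B)*(A+B) <= del*(A+B)) by (apply Rmult_le_compat_r; lra).
    assert (del*(A+B) <= del*(2*A)) by (apply Rmult_le_compat_l; lra).
    nra. }
  assert (X0^2 <= (t*A + del)^2) by nra.
  assert ((1-t)*X0^2 <= (1-t)*(t*A + del)^2) by nra.
  assert (t*(1-t)*(A^2-B^2) <= t*(1-t)*(2*A*del)).
  { apply Rmult_le_compat_l. nra. exact AB. }
  assert (0 <= t * A * del) by (apply Rmult_le_pos; [apply Rmult_le_pos|]; lra).
  assert ((1-t)*(4*t*A*del + del^2) <= 4*A*del + del^2) by nra.
  assert (C2 : d (s1 t) (s2 t) ^ 2 <= (1-t)*(t*A + del)^2 + t * ((1-t)*A)^2 - t*(1-t)*B^2) by lra.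
  replace ((1-t)*(t*A + del)^2 + t * ((1-t)*A)^2 - t*(1-t)*B^2)
    with ((1-t)*(4*t*A*del + del^2) - t*(1-t)*2*A*del + t*(1-t)*(A^2-B^2)) in C2 by ring.
  nra.
Qed.

Lemma cl_convex (T : Type) (d : T -> T -> R) (HT : is_Hadamard T d) K :
  convex T d K -> convex T d (cl T d K).
Proof.
  destruct HT as (Hm & _ & Hg & Hc).
  pose proof Hm as (Hp & Hz & Hs & Htr).
  intros HK a b s Ha Hb Hsg t Ht eps Heps.
  set (A := d a b).
  assert (0 <= A) by apply Hp.
  set (d0 := Rmin 1 (eps^2 / (4 * (4*A+5)))).
  assert (d0p : 0 < d0).
  { apply Rmin_pos. lra. apply Rdiv_lt_0_compat. nra. lra. }
  assert (d01 : d0 <= 1) by apply Rmin_l.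
  assert (d02 : d0 * (4*A+5) <= eps^2/4).
  { assert (d0 <= eps^2 / (4 * (4*A+5))) by apply Rmin_r.
    apply Rmult_le_compat_r with (r := 4*A+5) in H0; [|lra].
    replace (eps ^ 2 / (4 * (4 * A + 5)) * (4 * A + 5)) with (eps^2/4) in H0 by (field; lra).
    exact H0. }
  destruct (Ha d0 d0p) as (a' & Ka' & da').
  destruct (Hb d0 d0p) as (b' & Kb' & db').
  destruct (Hg a' b) as (tau & Gtau).
  destruct (Hg a' b') as (s' & Gs').
  exists (s' t). split.
  - apply (HK a' b' s' Ka' Kb' Gs' t Ht).
  - pose proof (geo_close T d Hm Hc a a' b s tau t Hsg Gtau Ht) as E1.
    pose proof (geo_close T d Hm Hc b b' a' _ _ (1 - t)
      (geo_rev T d Hm _ _ _ Gtau) (geo_rev T d Hm _ _ _ Gs') ltac:(lra)) as E2.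
    cbv beta in E2. replace (1 - (1 - t)) with t in E2 by ring.
    assert (dba : d b a' <= A + d a a').
    { pose proof (Htr b a a') as Q. rewrite (Hs b a) in Q. unfold A; lra. }
    assert (0 <= d a a') by apply Hp. assert (0 <= d b b') by apply Hp.
    assert (0 <= d b a') by apply Hp.
    assert (F1 : d (s t) (tau t) ^ 2 < eps^2/4).
    { fold A in E1. nra. }
    assert (F2 : d (tau t) (s' t) ^ 2 < eps^2/4) by nra.
    assert (0 <= d (s t) (tau t)) by apply Hp.
    assert (0 <= d (tau t) (s' t)) by apply Hp.
    assert (d (s t) (tau t) < eps/2) by nra.
    assert (d (tau t) (s' t) < eps/2) by nra.
    pose proof (Htr (s t) (tau t) (s' t)). lra.
Qed.

Lemma betw (T : Type) (d : T -> T -> R) (Hm : is_metric T d) (P Q : T * R) p tau :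
  is_geodesic (T * R) (prod_dist d) P Q p -> 0 <= tau <= 1 ->
  d (fst P) (fst (p tau)) + d (fst (p tau)) (fst Q) = d (fst P) (fst Q).
Proof.
  pose proof Hm as (Hp & Hz & Hs & Htr).
  intros (e0 & e1 & hd) Htau.
  assert (D1 : prod_dist d P (p tau) = tau * prod_dist d P Q).
  { rewrite <- e0 at 1. rewrite hd by lra. rewrite Rabs_left1 by lra. ring. }
  assert (D2 : prod_dist d (p tau) Q = (1 - tau) * prod_dist d P Q).
  { rewrite <- e1 at 1. rewrite hd by lra. rewrite Rabs_left1 by lra. ring. }
  assert (S : prod_dist d P (p tau) + prod_dist d (p tau) Q = prod_dist d P Q)
    by (rewrite D1, D2; ring).
  destruct P as (a, s). destruct Q as (b, u). destruct (p tau) as (z, r).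
  unfold prod_dist in S; simpl in S |- *.
  symmetry. apply (arith_betw _ _ _ (s - r) (r - u)); try apply Hp; try apply Htr.
  replace (s - r + (r - u)) with (s - u) by ring. exact S.
Qed.

Lemma on_geo (T : Type) (d : T -> T -> R) (HT : is_Hadamard T d) K a b z :
  convex T d K -> K a -> K b -> d a z + d z b = d a b -> K z.
Proof.
  destruct HT as (Hm & _ & Hg & Hc).
  pose proof Hm as (Hp & Hz & Hs & Htr).
  intros HK Ka Kb E.
  assert (0 <= d a z) by apply Hp. assert (0 <= d z b) by apply Hp.
  destruct (Req_dec (d a b) 0) as [A0|A0].
  - assert (d a z = 0) by lra. apply Hz in H1. subst z. exact Ka.
  - assert (Apos : 0 < d a b) by (pose proof (Hp a b); lra).
    destruct (Hg a b) as (sg & G).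
    set (t := d a z / d a b).
    assert (Ht : 0 <= t <= 1).
    { assert (tD : t * d a b = d a z) by (unfold t; field; lra).
      split; nra. }
    pose proof (Hc a b z sg t G Ht) as C.
    rewrite (Hs z a) in C. replace (d z b) with (d a b - d a z) in C by lra.
    assert (x1 : d a z = t * d a b) by (unfold t; field; lra).
    rewrite x1 in C.
    replace ((1 - t) * (t * d a b) ^ 2 + t * (d a b - t * d a b) ^ 2 -
        t * (1 - t) * d a b ^ 2) with 0 in C by ring.
    assert (0 <= d z (sg t)) by apply Hp.
    assert (d z (sg t) = 0).
    { destruct (Rle_lt_dec (d z (sg t)) 0); [lra|].
      assert (0 < d z (sg t)^2) by (apply pow_lt; lra). lra. }
    apply Hz in H2. rewrite H2. exact (HK a b sg Ka Kb G t Ht).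
Qed.

Lemma lower_m (n : nat) (y : nat -> R) : exists m, forall i, (i < n)%nat -> m <= y i.
Proof.
  induction n as [|n [m Hm]].
  - exists 0. intros i Hi. lia.
  - exists (Rmin m (y n)). intros i Hi.
    destruct (Nat.eq_dec i n) as [->|Hne].
    + apply Rmin_r.
    + eapply Rle_trans. apply Rmin_l. apply Hm. lia.
Qed.

Theorem lemma15 (T : Type) (d : T -> T -> R) (HT : is_Hadamard T d)
  (n : nat) (X : nat -> T) (y : nat -> R) :
  forall x : T,
    Rbar_lt m_infty (hbar d n X y x) <-> cl T d (conv T d (pts n X)) x.
Proof.
  intros x.
  pose proof HT as (Hm & _ & Hg & Hc).
  pose proof Hm as (Hp & Hz & Hs & Htr).
  set (C := cl T d (conv T d (pts n X))).
  split.
  - intros H. destruct (classic (C x)) as [HC|HnC]; [exact HC|exfalso].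
    set (g := fun z => if excluded_middle_informative (C z) then p_infty else m_infty).
    assert (Hcvx : convex T d C).
    { apply cl_convex; auto. intros a b s Ha Hb Hs' t Ht S HS HpS.
      apply (HS a b s); [apply Ha; auto | apply Hb; auto | exact Hs' | exact Ht]. }
    assert (Hu : usc T d g).
    { intros x0 c Hlt. unfold g in Hlt.
      destruct (excluded_middle_informative (C x0)) as [Cx0|nCx0]; [simpl in Hlt; contradiction|].
      unfold C, cl in nCx0.
      apply not_all_ex_not in nCx0. destruct nCx0 as [eps Heps].
      apply imply_to_and in Heps. destruct Heps as [Heps Hno].
      exists (eps/2). split; [lra|]. intros z Hdz. unfold g.
      destruct (excluded_middle_informative (C z)) as [Cz|nCz]; [|simpl; exact I].
      exfalso. destruct (Cz (eps/2) ltac:(lra)) as (w & Cw & Hw).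
      apply Hno. exists w. split; auto. pose proof (Htr x0 z w). lra. }
    assert (Hcc : concave d g).
    { intros P Q p HP HQ Hp' tau Htau. unfold Defs.hypo, g in *.
      destruct (excluded_middle_informative (C (fst P))) as [CP|]; [|simpl in HP; contradiction].
      destruct (excluded_middle_informative (C (fst Q))) as [CQ|]; [|simpl in HQ; contradiction].
      destruct (excluded_middle_informative (C (fst (p tau)))) as [|nC]; [simpl; exact I|].
      exfalso. apply nC.
      apply (on_geo T d HT C (fst P) (fst Q)); auto.
      apply (betw T d Hm P Q p tau); auto. }
    assert (Hmaj : majorizes_fy n X y g).
    { intros i Hi. unfold g.
      destruct (excluded_middle_informative (C (X i))) as [|nC]; [simpl; exact I|].
      exfalso. apply nC. intros eps Heps. exists (X i). split.
      - intros S _ HS. apply HS. exists i. auto.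
      - assert (d (X i) (X i) = 0) by (apply Hz; reflexivity). lra. }
    assert (Hgx : g x = m_infty).
    { unfold g. destruct (excluded_middle_informative (C x)); [contradiction|reflexivity]. }
    destruct (glb_correct (fun v => exists g : T -> Rbar,
       usc T d g /\ concave d g /\ majorizes_fy n X y g /\ v = g x)) as [Hlb _].
    assert (Hle := Hlb m_infty (ex_intro _ g (conj Hu (conj Hcc (conj Hmaj (eq_sym Hgx)))))).
    unfold hbar in H.
    destruct (Rbar_glb _); simpl in Hle, H; auto.
  - intros Hcl.
    destruct (lower_m n y) as [m Hm'].
    destruct (glb_correct (fun v => exists g : T -> Rbar,
       usc T d g /\ concave d g /\ majorizes_fy n X y g /\ v = g x)) as [_ Hgl].
    assert (Hle : Rbar_le (Finite m) (hbar d n X y x)).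
    { apply Hgl. intros v (g & Hu & Hcc & Hmaj & ->).
      apply Rbar_not_lt_le. intros Hlt.
      destruct (Hu x m Hlt) as (del & Hdel & Hnb).
      destruct (Hcl del Hdel) as (z & Cz & Hdz).
      apply (Rbar_lt_not_le _ _ (Hnb z Hdz)).
      apply (Cz (fun w => Rbar_le (Finite m) (g w))).
      + intros a b s Ha Hb Hsg t Ht.
        set (p := fun u => (s u, m)).
        assert (Gp : is_geodesic (T * R) (prod_dist d) (a, m) (b, m) p).
        { destruct Hsg as (e0 & e1 & hd). split; [|split].
          - unfold p. rewrite e0. reflexivity.
          - unfold p. rewrite e1. reflexivity.
          - intros s1 t1 H1 H2. unfold p, prod_dist. cbn [fst snd]. rewrite hd by auto.
            replace (m - m) with 0 by ring.
            replace ((Rabs (s1 - t1) * d a b) ^ 2 + 0 ^ 2) with ((Rabs (s1 - t1) * d a b) ^ 2) by ring.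
            replace (d a b ^ 2 + 0 ^ 2) with (d a b ^ 2) by ring.
            rewrite <- !Rsqr_pow2, !sqrt_Rsqr; auto.
            apply Rmult_le_pos; auto. apply Rabs_pos. }
        exact (Hcc (a, m) (b, m) p Ha Hb Gp t Ht).
      + intros w (i & Hi & ->). specialize (Hmaj i Hi).
        eapply Rbar_le_trans; [|exact Hmaj]. simpl. auto. }
    destruct (hbar d n X y x); simpl in *; auto.
Qed.
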